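(* Fix a node $t$ whose neighbor set is partitioned into a primary set $\mathcal{S}^*$ and a secondary set $\mathcal{S}^c$, with nonnegative attention weights $\alpha_{t,s}$ and message vectors $m_{s\to t}\in\mathbb{R}^d$, and one-step aggregation $h_t=\sum_{s\in\mathcal{S}^*\cup\mathcal{S}^c}\alpha_{t,s}\,m_{s\to t}$. Let $A^*(t):=\sum_{s\in\mathcal{S}^*}\alpha_{t,s}$ and $h_t^*:=\sum_{s\in\mathcal{S}^*}\alpha_{t,s}\,m_{s\to t}$. Let the classifier logits be $z_k=w_k^\top h_t$ with $w_k\in\mathbb{R}^d$, and let $\mathcal{P}(t)$ be the set of positive labels of $t$, with $L:=|\mathcal{P}(t)|$. Assume (i) $\|m_{s\to t}\|\le M$ for all $s\in\mathcal{S}^*$, and (ii) there exist constants $a>0$ and $b\le aM$ such that $z_k\le a\|h_t^*\|+b$ for each positive label $k\in\mathcal{P}(t)$. Then $$\sum_{k\in\mathcal{P}(t)}-\log\sigma(z_k)\;\ge\;L\cdot\Bigl(-\log\sigma\bigl(aMA^*(t)+b\bigr)\Bigr).$$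
   Context: $\sigma(x)=1/(1+e^{-x})$ is the logistic sigmoid. The attention weights are softmax weights over the neighbors of $t$ (in particular nonnegative). *)

(* Defs.v *)
From mathcomp Require Import all_boot all_order all_algebra.
From mathcomp Require Import all_classical all_reals all_analysis.
Set Implicit Arguments. Unset Strict Implicit. Unset Printing Implicit Defensive.
Import Order.TTheory GRing.Theory Num.Theory.
Local Open Scope ring_scope.

Definition sigmoid {R : realType} (x : R) : R := 1 / (1 + expR (- x)).

Definition enorm {R : realType} {d : nat} (v : 'rV[R]_d) : R :=
  Num.sqrt (\sum_(i < d) v 0 i ^+ 2).

Definition dotv {R : realType} {d : nat} (w h : 'rV[R]_d) : R :=
  \sum_(i < d) w 0 i * h 0 i.

(* Main.v *)
Require Import Defs.
From mathcomp Require Import all_boot all_order all_algebra.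
From mathcomp Require Import all_classical all_reals all_analysis.
From mathcomp Require Import ring lra.
Import Order.TTheory GRing.Theory Num.Theory.
Local Open Scope ring_scope.

Section H.
Variable R : realType.
Variable d : nat.
Implicit Types u v : 'rV[R]_d.

Definition sq u := \sum_(i < d) u 0 i ^+ 2.

Lemma sq_ge0 u : 0 <= sq u.
Proof. by apply: sumr_ge0 => i _; rewrite sqr_ge0. Qed.

Lemma cs u v : dotv u v ^+ 2 <= sq u * sq v.
Proof.
have E : \sum_(i < d) \sum_(j < d) (u 0 i * v 0 j - u 0 j * v 0 i) ^+ 2 =
  (sq u * sq v - dotv u v ^+ 2) *+ 2.
  have A : sq u * sq v = \sum_(i < d) \sum_(j < d) (u 0 i ^+ 2 * v 0 j ^+ 2).
    rewrite /sq mulr_suml; apply: eq_bigr => i _; by rewrite mulr_sumr.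
  have B : sq u * sq v = \sum_(i < d) \sum_(j < d) (u 0 j ^+ 2 * v 0 i ^+ 2).
    rewrite mulrC /sq mulr_suml; apply: eq_bigr => i _; rewrite mulr_sumr.
    by apply: eq_bigr => j _; rewrite mulrC.
  have C : dotv u v ^+ 2 = \sum_(i < d) \sum_(j < d) (u 0 i * v 0 i * (u 0 j * v 0 j)).
    rewrite expr2 /dotv mulr_suml; apply: eq_bigr => i _; by rewrite mulr_sumr.
  rewrite mulrnBl mulr2n {1}A B C.
  rewrite -big_split /= -sumrMnl -sumrB; apply: eq_bigr => i _.
  rewrite -big_split /= -sumrMnl -sumrB; apply: eq_bigr => j _.
  ring.
have : 0 <= (sq u * sq v - dotv u v ^+ 2) *+ 2.
  by rewrite -E; apply: sumr_ge0 => i _; apply: sumr_ge0 => j _; rewrite sqr_ge0.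
rewrite pmulrn_lge0 // subr_ge0 //.
Qed.

Lemma enorm_ge0 u : 0 <= enorm u.
Proof. exact: sqrtr_ge0. Qed.

Lemma enorm_sq u : enorm u ^+ 2 = sq u.
Proof. by rewrite /enorm sqr_sqrtr // sq_ge0. Qed.

Lemma enormD u v : enorm (u + v) <= enorm u + enorm v.
Proof.
rewrite -(ler_pXn2r (n:=2)) // ?nnegrE ?addr_ge0 ?enorm_ge0 //.
have Hd : dotv u v <= enorm u * enorm v.
  have h1 : dotv u v <= `|dotv u v| by apply: ler_norm.
  apply: (le_trans h1).
  rewrite -sqrtr_sqr /enorm -sqrtrM ?sq_ge0 //.
  by rewrite ler_sqrt ?mulr_ge0 ?sq_ge0 // cs.
have -> : enorm (u + v) ^+ 2 = enorm u ^+ 2 + enorm v ^+ 2 + 2 * dotv u v.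
  rewrite !enorm_sq /sq /dotv mulr_sumr -!big_split /=; apply: eq_bigr => i _.
  rewrite !mxE; ring.
lra.
Qed.

Lemma enormZ c u : enorm (c *: u) = `|c| * enorm u.
Proof.
rewrite /enorm -sqrtr_sqr -sqrtrM ?sqr_ge0 //; congr Num.sqrt.
rewrite mulr_sumr; apply: eq_bigr => i _; rewrite !mxE; ring.
Qed.

Lemma enorm0 : enorm (0 : 'rV[R]_d) = 0.
Proof.
rewrite /enorm big1 ?sqrtr0 // => i _; by rewrite mxE expr0n.
Qed.

End H.

Lemma enorm_sum (R : realType) (d : nat) (I : finType) (A : {set I}) (f : I -> 'rV[R]_d) :
  enorm (\sum_(s in A) f s) <= \sum_(s in A) enorm (f s).
Proof.
apply: (big_ind2 (fun x y => enorm x <= y)).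
- by rewrite enorm0.
- move=> u1 r1 u2 r2 h1 h2; apply: le_trans (enormD _ _ u1 u2) _; exact: lerD.
- by [].
Qed.

Lemma sigmoid_gt0 (R : realType) (x : R) : 0 < sigmoid x.
Proof. by rewrite /sigmoid div1r invr_gt0 ltr_wpDr // ?expR_ge0. Qed.

Lemma nlsig_anti (R : realType) (x y : R) : x <= y ->
  - ln (sigmoid y) <= - ln (sigmoid x).
Proof.
move=> hxy; rewrite lerN2 ler_ln ?posrE ?sigmoid_gt0 //.
rewrite /sigmoid !div1r lef_pV2 ?posrE ?ltr_wpDr ?expR_ge0 //.
by rewrite lerD2l ler_expR lerN2.
Qed.

Theorem theoremA2 (R : realType) (d : nat) (N K : finType)
  (Sstar : {set N}) (alpha : N -> R) (m : N -> 'rV[R]_d)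
  (w : K -> 'rV[R]_d) (P : {set K}) (M a b : R) :
  (forall s, 0 <= alpha s) ->
  let h := \sum_(s : N) alpha s *: m s in
  let hstar := \sum_(s in Sstar) alpha s *: m s in
  let Astar := \sum_(s in Sstar) alpha s in
  let z := fun k => dotv (w k) h in
  (forall s, s \in Sstar -> enorm (m s) <= M) ->
  0 < a -> b <= a * M ->
  (forall k, k \in P -> z k <= a * enorm hstar + b) ->
  \sum_(k in P) - ln (sigmoid (z k))
    >= #|P|%:R * (- ln (sigmoid (a * M * Astar + b))).
Proof.
move=> ha0 h hstar Astar z hM ha hb hz.
have Hn : enorm hstar <= M * Astar.
  rewrite /hstar. apply: le_trans (enorm_sum _ _ _ Sstar (fun s => alpha s *: m s)) _.
  rewrite /Astar mulr_sumr; apply: ler_sum => s hs.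
  rewrite enormZ (ger0_norm (ha0 s)) [X in _ <= X]mulrC.
  apply: ler_wpM2l; [exact: ha0 | exact: hM].
rewrite mulr_natl -sumr_const.
apply: ler_sum => k hk; apply: (nlsig_anti R (z k) (a * M * Astar + b)).
apply: (le_trans (hz k hk)); rewrite lerD2r -mulrA.
exact: (ler_wpM2l (ltW ha) Hn).
Qed.
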